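(* Let $\mathcal I$ be a chore allocation instance with agents $N=\{1,\dots,n\}$, chores $M$, additive valuations with $V_{ij}:=V_i(\{j\})\le0$ and $V_i(M)=-1$, and shares $s_i\in(0,1]$ summing to $1$. Let $\alpha^*$ be the optimal value of the integer program $$\min\ \alpha\quad\text{s.t.}\quad \sum_{j\in M}V_{ij}x_{ij}\ge\alpha\,\mathsf{WMMS}_i\ (\forall i),\ \ \sum_{i\in N}x_{ij}=1\ (\forall j),\ \ x_{ij}\in\{0,1\},\ \ \alpha\ge1.$$ Let $c^*=\min\{c\ge0:\ \mathcal P \text{ with } t_i=w_i=c\,\mathsf{WMMS}_i \text{ for all } i \text{ has a feasible solution}\}$, where $\mathcal P$ is the linear system in variables $x_{ij}$ ($i\in N$, $j\in M_i$), with $M_i=\{j\in M: V_{ij}\ge t_i\}$ and $N_j=\{i: j\in M_i\}$: $$\sum_{j\in M_i}V_{ij}x_{ij}\ge w_i\ (\forall i),\qquad \sum_{i\in N_j}x_{ij}=1\ (\forall j),\qquad x_{ij}\ge0.$$ Then $\alpha^*\ge c^*$.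
   Context: $\mathsf{WMMS}_i:=\max_{\langle Y_1,\dots,Y_n\rangle}\min_{k\in N}V_i(Y_k)\frac{s_i}{s_k}$, the maximum over all ordered partitions of $M$ into $n$ possibly empty bundles. $\alpha^*$ is the optimal WMMS (OWMMS) ratio: the smallest $\alpha\ge1$ for which an allocation with $V_i(X_i)\ge\alpha\,\mathsf{WMMS}_i$ for all $i$ exists. *)

(* Defs.v *)
From HB Require Import structures.
From mathcomp Require Import all_boot all_order all_algebra.
From mathcomp Require Import all_classical all_reals.
Set Implicit Arguments. Unset Strict Implicit. Unset Printing Implicit Defensive.
Import Order.TTheory GRing.Theory Num.Theory.
Local Open Scope ring_scope.
Local Open Scope classical_set_scope.

Section Chores.
Variables (R : realType) (N M : finType).
Variables (V : N -> M -> R) (s : N -> R).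

(* V_i(Y_k) for the k-th bundle of the ordered partition encoded by sigma
   (chore j goes to bundle sigma j; bundles may be empty). *)
Definition bundle_val (i : N) (sigma : {ffun M -> N}) (k : N) : R :=
  \sum_(j in M | sigma j == k) V i j.

(* WMMS_i = max over ordered partitions of min_k V_i(Y_k) * s_i / s_k.
   Both max and min are over finite nonempty sets (N nonempty), so sup/inf
   coincide with max/min. *)
Definition WMMS (i : N) : R :=
  sup [set x | exists sigma : {ffun M -> N},
         x = inf [set y | exists k : N, y = bundle_val i sigma k * (s i / s k)]].

Definition IP_feasible (alpha : R) : Prop :=
  exists x : N -> M -> R,
    (forall i j, x i j = 0 \/ x i j = 1) /\
    (forall j, \sum_(i in N) x i j = 1) /\
    (forall i, \sum_(j in M) V i j * x i j >= alpha * WMMS i).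

Definition alpha_star : R := inf [set a | 1 <= a /\ IP_feasible a].

(* the linear system P(t, w); x i j is only meaningful for j in M_i,
   i.e. V i j >= t i; other entries are unused *)
Definition P_feasible (t w : N -> R) : Prop :=
  exists x : N -> M -> R,
    (forall i, \sum_(j in M | V i j >= t i) V i j * x i j >= w i) /\
    (forall j, \sum_(i in N | V i j >= t i) x i j = 1) /\
    (forall i j, V i j >= t i -> 0 <= x i j).

Definition c_star : R :=
  inf [set c | 0 <= c /\
         P_feasible (fun i => c * WMMS i) (fun i => c * WMMS i)].

End Chores.

(* Main.v *)
Require Import Defs.
From HB Require Import structures.
From mathcomp Require Import all_boot all_order all_algebra.
From mathcomp Require Import all_classical all_reals.
From mathcomp Require Import ring lra.
Import Order.TTheory GRing.Theory Num.Theory.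
Local Open Scope ring_scope.

Theorem lemma6 (R : realType) (N M : finType) (V : N -> M -> R) (s : N -> R)
  (hV : forall i j, V i j <= 0)
  (hVM : forall i, \sum_(j in M) V i j = -1)
  (hs : forall i, 0 < s i <= 1)
  (hs1 : \sum_(i in N) s i = 1) :
  c_star V s <= alpha_star V s.
Proof.
have [i0 _] : exists i0 : N, true.
  case: (pickP (@predT N)) => [i0 _|h]; first by exists i0.
  by move: hs1; rewrite big_pred0 // => /eqP; rewrite eq_sym oner_eq0.
set n : R := #|N|%:R.
have n0 : 0 < n by rewrite /n ltr0n; apply/card_gt0P; exists i0.
have Wb : forall i, WMMS V s i <= - (s i / n).
  move=> i; rewrite /WMMS; apply: ge_sup.
    by exists (inf [set y | exists k : N, y = bundle_val V i [ffun=> i0] k * (s i / s k)]); exists [ffun=> i0].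
  move=> x [sigma ->].
  set b := bundle_val V i sigma.
  set y := fun k => b k * (s i / s k).
  have [k0 _ hk0] := arg_minP b (isT : predT i0).
  have [k1 _ hk1] := arg_minP y (isT : predT i0).
  have hsum : \sum_(k in N) b k = -1.
    by rewrite /b /bundle_val -(hVM i) (partition_big sigma predT).
  have hb : b k0 * n <= -1.
    have -> : b k0 * n = \sum_(k in N) b k0 by rewrite sumr_const /n mulr_natr.
    rewrite -hsum; apply: ler_sum => k _; exact: hk0.
  have : inf [set y0 | exists k : N, y0 = b k * (s i / s k)] <= y k0.
    apply: ge_inf; last by exists k0.
    by exists (y k1) => z [k ->]; apply: hk1.
  move/le_trans; apply.
  rewrite /y; set q := s i / s k0.
  have /andP[si0 si1] := hs i. have /andP[sk0 sk1] := hs k0.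
  have hq : s i <= q by rewrite /q ler_pdivlMr //; nra.
  have : b k0 * q * n <= - s i by nra.
  by rewrite -mulNr ler_pdivlMr.
set alpha := 1 + \sum_(i in N) n / s i.
have alpha_ge : forall i, n / s i <= alpha.
  move=> i; rewrite /alpha (bigD1 i) //=.
  have : 0 <= \sum_(k in N | k != i) n / s k.
    apply: sumr_ge0 => k _; apply: divr_ge0; first exact: ltW.
    by case/andP: (hs k) => /ltW.
  lra.
have Ane : (fun a => 1 <= a /\ IP_feasible V s a) alpha.
  split.
    rewrite /alpha; have : 0 <= \sum_(i in N) n / s i.
      apply: sumr_ge0 => k _; apply: divr_ge0; first exact: ltW.
      by case/andP: (hs k) => /ltW.
    lra.
  exists (fun i j => if i == i0 then 1 else 0); split; last split.
  - by move=> i j; case: (i == i0); [right|left].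
  - move=> j; rewrite (bigD1 i0) //= eqxx big1 ?addr0 // => i /negbTE -> //.
  - move=> i.
    have h1 : -1 <= \sum_(j in M) V i j * (if i == i0 then 1 else 0).
      rewrite -(hVM i); apply: ler_sum => j _.
      by case: (i == i0); rewrite ?mulr1 ?mulr0 ?hV.
    apply: le_trans h1.
    have /andP[si0 _] := hs i.
    have Wi := Wb i.
    have ha := alpha_ge i.
    have hr : n / s i * (s i / n) = 1.
      by field; apply/andP; split; rewrite gt_eqF.
    have hr0 : 0 < n / s i by apply: divr_gt0.
    have hsn : 0 < s i / n by apply: divr_gt0.
    nra.
have sub : forall a, (fun a => 1 <= a /\ IP_feasible V s a) a ->
    (fun c => 0 <= c /\ P_feasible V (fun i => c * WMMS V s i) (fun i => c * WMMS V s i)) a.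
  move=> a [a1 [x [hx [hcol hrow]]]]; split; first lra.
  have key : forall i j, x i j = 1 -> a * WMMS V s i <= V i j.
    move=> i j xij; apply: le_trans (hrow i) _.
    rewrite (bigD1 j) //= xij mulr1.
    have : \sum_(k in M | k != j) V i k * x i k <= 0.
      apply: sumr_le0 => k _; case: (hx i k) => ->; rewrite ?mulr0 ?mulr1 //.
    lra.
  have zero : forall i j, ~~ (a * WMMS V s i <= V i j) -> x i j = 0.
    move=> i j /negP h; case: (hx i j) => // /key //.
  exists x; split; last split.
  - move=> i; apply: le_trans (hrow i) _; rewrite big_mkcondr /=.
    apply: ler_sum => j _; case: ifP => // /negbT /zero ->; by rewrite mulr0.
  - move=> j; rewrite -(hcol j) big_mkcondr /=.
    apply: eq_bigr => i _; case: ifP => // /negbT /zero -> //.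
  - move=> i j _; by case: (hx i j) => ->.
rewrite /alpha_star /c_star; apply: lb_le_inf; first by exists alpha.
move=> a /sub hC; apply: ge_inf => //.
by exists 0 => z [].
Qed.
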